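(* Let $(K,C,S)$ be the associated layered complex of a divided simplicial complex. If $(K,C,S)$ admits no $S$-collapse and $(K',C,S)$ is obtained from $(K,C,S)$ by an intermediate collapse, then $(K',C,S)$ still does not admit an $S$-collapse.
   Context: A simplicial complex $K$ is a set of finite nonempty sets (simplices) closed under passing to nonempty subsets (faces); $K^0$ is its vertex set; $t<s$ means $t$ is a proper face of $s$. A simplex is principal in $K$ if it is not a proper face of any simplex of $K$; $s$ is free in $K$ if it is a proper face of a principal simplex $p$ and of no other simplex of $K$. A layered simplicial complex is $(K,C,S)$ with $C,S$ disjoint subcomplexes; $\mathrm{IM}(K,C,S)$ denotes simplices in neither $C$ nor $S$. A divided simplicial complex is $(K,S^0)$, $S^0\subseteq K^0$; its associated layered complex has $S$ = simplices with all vertices in $S^0$, $C$ = simplices with all vertices in $K^0-S^0$. $(K,C,S)$ admits an $S$-collapse if there exist $p\in S$ principal in $K$ and a face $s$ of $p$ free in $K$ (the elementary $S$-collapse then yields $(K-\{s,p\},C,S-\{s,p\})$). For $(K,C,S)$ associated to a divided complex $(K,S^0)$, an elementary intermediate collapse replaces it by $(K-\{s,p\},C,S)$ where (i) $p\in\mathrm{IM}(K,C,S)$, (ii) $p$ is principal in $K$, (iii) $s$ is a face of $p$ free in $K$, (iv) every $t\in S$ with $t<p$ satisfies $t<s$; the result is again the layered complex associated to the divided complex $(K-\{s,p\},S^0)$. An intermediate collapse is a finite sequence of elementary intermediate collapses. *)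

(* Defs.v *)
From mathcomp Require Import all_boot.
Set Implicit Arguments. Unset Strict Implicit. Unset Printing Implicit Defensive.

Section Simplicial.
Variable V : finType.

Definition is_complex (K : {set {set V}}) : Prop :=
  forall s, s \in K -> s != set0 /\
    (forall t : {set V}, t \subset s -> t != set0 -> t \in K).

Definition vertices (K : {set {set V}}) : {set V} := [set v | [set v] \in K].

Definition principal (K : {set {set V}}) (p : {set V}) : Prop :=
  p \in K /\ forall q, q \in K -> ~ (p \proper q).

Definition free (K : {set {set V}}) (s : {set V}) : Prop :=
  s \in K /\ exists p, [/\ principal K p, s \proper p &
    forall q, q \in K -> s \proper q -> q = p].

(* associated layered complex of the divided complex (K, S0) *)
Definition S_of (K : {set {set V}}) (S0 : {set V}) : {set {set V}} :=
  [set s in K | s \subset S0].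
Definition C_of (K : {set {set V}}) (S0 : {set V}) : {set {set V}} :=
  [set s in K | s \subset vertices K :\: S0].

Definition divided (K : {set {set V}}) (S0 : {set V}) : Prop :=
  is_complex K /\ S0 \subset vertices K.

Definition admits_S_collapse (K S : {set {set V}}) : Prop :=
  exists p s : {set V}, [/\ p \in S, principal K p, s \subset p & free K s].

Definition elem_int_collapse (S0 : {set V}) (K K' : {set {set V}}) : Prop :=
  exists p s : {set V},
    [/\ p \in K, p \notin C_of K S0, p \notin S_of K S0 & principal K p] /\
    [/\ s \subset p, free K s,
     (forall t, t \in S_of K S0 -> t \proper p -> t \proper s) &
     K' = K :\: [set s; p]].

Inductive int_collapse (S0 : {set V}) : {set {set V}} -> {set {set V}} -> Prop :=
  | ic_refl K : int_collapse S0 K K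
  | ic_step K K1 K' : elem_int_collapse S0 K K1 -> int_collapse S0 K1 K' ->
      int_collapse S0 K K'.

End Simplicial.

(* Main.v *)
Require Import Defs.
From mathcomp Require Import all_boot.

Section Aux.
Variable V : finType.
Implicit Types K : {set {set V}}.

Lemma between K (a m b : {set V}) : is_complex K ->
  a \proper m -> m \proper b -> b \in K ->
  exists c, [/\ c \in K, a \proper c, c \subset b, c != m & c != b].
Proof.
move=> cK am mb bK.
have [_ [x xb xm]] := properP mb.
have [_ [v vm va]] := properP am.
have sam := proper_sub am. have smb := proper_sub mb.
have xa : x \notin a by apply: contra xm; apply: (subsetP sam).
exists (a :|: (b :\: m)); split.
- apply: (proj2 (cK b bK)).
  + apply/subsetP => y; rewrite !inE => /orP [ya|/andP [_ ->]] //.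
    by apply: (subsetP smb); apply: (subsetP sam).
  + by apply/set0Pn; exists x; rewrite !inE xb xm orbT.
- apply/properP; split; first exact: subsetUl.
  by exists x => //; rewrite !inE xb xm orbT.
- apply/subsetP => y; rewrite !inE => /orP [ya|/andP [_ ->]] //.
  by apply: (subsetP smb); apply: (subsetP sam).
- apply/eqP => E; have : x \in m by rewrite -E !inE xb xm orbT.
  by rewrite (negbTE xm).
- apply/eqP => E; have vb : v \in b by apply: (subsetP smb).
  by move: vb; rewrite -E !inE (negbTE va) vm.
Qed.

Lemma step_facts K K1 S0 : is_complex K -> elem_int_collapse S0 K K1 ->
  [/\ is_complex K1, S_of K1 S0 = S_of K S0 &
   (~ admits_S_collapse K (S_of K S0) -> ~ admits_S_collapse K1 (S_of K S0))].
Proof.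
move=> cK [p [s [[pK _ pS [_ prp]] [sp [sK [p0 [[p0K prp0] sp0 u0]]] hiv ->]]]].
have sps : s \proper p.
  rewrite properEneq sp andbT; apply/eqP => E.
  by apply: (prp p0 p0K); rewrite -E.
have sS : s \notin S_of K S0.
  apply/negP => sS; have := hiv s sS sps; by rewrite properxx.
split.
- move=> a; rewrite !inE => /andP [an aK]; have [a0 hK] := cK a aK.
  split => // t ta t0; rewrite !inE (hK t ta t0) andbT.
  apply/negP => /orP [/eqP E|/eqP E]; subst t.
  + have sa : s \proper a.
      by rewrite properEneq ta andbT; apply/eqP => E; rewrite -E eqxx in an.
    have := u0 a aK sa; have := u0 p pK sps => <- E.
    by rewrite E eqxx orbT in an.
  + have : p \proper a.
      by rewrite properEneq ta andbT; apply/eqP => E; rewrite -E eqxx orbT in an.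
    exact: prp.
- apply/setP => t; rewrite !inE.
  case tK: (t \in K) => //=; case tS: (t \subset S0); rewrite ?andbF //= ?andbT.
  apply/norP; split; apply/eqP => E; subst t.
  + by move: sS; rewrite !inE tK tS.
  + by move: pS; rewrite !inE tK tS.
move=> noS [p' [s' [p'S [p'K1 prp'] s'p' [s'K1 [q1 [[q1K1 prq1] s'q1 u1]]]]]].
apply: noS; exists p', s'.
move: p'S; rewrite inE => /andP [p'K p'S0].
have inK1 : forall q, q \in K -> q != s -> q != p -> q \in K :\: [set s; p].
  by move=> q qK qs qp; rewrite !inE qK (negbTE qs) (negbTE qp).
have p'p : p' != p.
  apply/eqP => E; subst p'; by move: pS; rewrite !inE pK p'S0.
have cl1 : ~ p' \proper s.
  move=> p's; have [c [cKc p'c cp cs cpp]] := @between K _ _ _ cK p's sps pK.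
  exact: (prp' c (inK1 c cKc cs cpp)).
have cl2 : ~ p' \proper p.
  move=> p'p'; apply: cl1; apply: hiv => //; by rewrite inE p'K p'S0.
have prK : principal K p'.
  split => // q qK p'q.
  case: (eqVneq q s) => [E|qs]; first by subst q; exact: cl1.
  case: (eqVneq q p) => [E|qp]; first by subst q; exact: cl2.
  exact: (prp' q (inK1 q qK qs qp)).
have s'pp : s' \proper p'.
  rewrite properEneq s'p' andbT; apply/eqP => E.
  by apply: (prp' q1 q1K1); rewrite -E.
have p'q1 := u1 p' p'K1 s'pp.
have s'K : s' \in K by move: s'K1; rewrite inE => /andP [].
have s'S : s' \in S_of K S0.
  by rewrite inE s'K; apply: subset_trans s'p' p'S0.
have p'S : p' \in S_of K S0 by rewrite inE p'K p'S0.
split; [by rewrite p'K p'S0 | exact: prK | exact: s'p' | ].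
split => //; exists p'; split => // q qK s'q.
case: (eqVneq q s) => [E|qs]; last case: (eqVneq q p) => [E|qp].
- exfalso; subst q.
  have [c [cKc s'c cp cs cpp]] := @between K _ _ _ cK s'q sps pK.
  have := u1 c (inK1 c cKc cs cpp) s'c; rewrite -p'q1 => E; subst c.
  by apply: cl2; rewrite properEneq p'p cp.
- exfalso; subst q.
  have s's := hiv s' s'S s'q.
  have [c [cKc s'c cp cs cpp]] := @between K _ _ _ cK s's sps pK.
  have := u1 c (inK1 c cKc cs cpp) s'c; rewrite -p'q1 => E; subst c.
  by apply: cl2; rewrite properEneq p'p cp.
- by rewrite (u1 q (inK1 q qK qs qp) s'q).
Qed.

Lemma ic_gen S0 K K' : int_collapse S0 K K' -> is_complex K ->
  ~ admits_S_collapse K (S_of K S0) -> ~ admits_S_collapse K' (S_of K S0).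
Proof.
elim=> {K K'} [K //|K K1 K' st _ IH] cK noS.
have [cK1 E H] := @step_facts K K1 S0 cK st.
by rewrite -E; apply: IH => //; rewrite E; apply: H.
Qed.
End Aux.

Theorem proposition4p15 (V : finType) (K K' : {set {set V}}) (S0 : {set V}) :
  divided K S0 ->
  ~ admits_S_collapse K (S_of K S0) ->
  int_collapse S0 K K' ->
  ~ admits_S_collapse K' (S_of K S0).
Proof.
move=> [cK _] noS ic; exact: ic_gen ic cK noS.
Qed.
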